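(* For a prime $p$ let $\mathrm{Aff}_1(p) = \{x \mapsto ax + b : a \in \mathbb{F}_p^\times, b \in \mathbb{F}_p\} \cong C_p \rtimes C_{p-1}$ act naturally on $\mathbb{F}_p$. Then the sequence of actions $(\mathrm{Aff}_1(p) \circlearrowright \mathbb{F}_p)_{p \geq 3}$ ($p$ ranging over odd primes) is not expanding.
   Context: For a group $G$ acting on a finite set $\Omega$ and a symmetric subset $S \subseteq G$, the Schreier graph $\mathrm{Sch}(G \circlearrowright \Omega, S)$ has vertex set $\Omega$ and an edge $(\omega, \omega^s)$ for each $\omega \in \Omega$, $s \in S$. For a finite graph $\Gamma$, $h_{ver}(\Gamma) = \min_{X \neq \emptyset, |X| \leq |V(\Gamma)|/2} |\partial_{ver}X|/|X|$, where $\partial_{ver}X$ is the set of vertices at distance exactly $1$ from $X$. A sequence of regular bounded-degree graphs with vertex counts tending to infinity is expander if $h_{ver} \geq \varepsilon$ for a fixed $\varepsilon > 0$. A sequence of transitive actions $(G_n \circlearrowright \Omega_n)$ is expanding if there are symmetric subsets $S_n \subseteq G_n$ of bounded cardinality with $(\mathrm{Sch}(G_n \circlearrowright \Omega_n, S_n))$ expander graphs. *)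

(* Defs.v *)
From HB Require Import structures.
From mathcomp Require Import all_boot all_order all_algebra all_fingroup.
From mathcomp Require Import reals.
Set Implicit Arguments. Unset Strict Implicit. Unset Printing Implicit Defensive.
Import Order.TTheory GRing.Theory Num.Theory.
Local Open Scope ring_scope.

Definition Aff (p : nat) : {set {perm 'F_p}} :=
  [set s : {perm 'F_p} | [exists a : 'F_p, exists b : 'F_p,
      (a != 0) && [forall x : 'F_p, s x == a * x + b]]].

Definition symmetric_set (gT : finGroupType) (S : {set gT}) : Prop :=
  forall s, s \in S -> (s^-1)%g \in S.

Definition sch_adj (T : finType) (S : {set {perm T}}) : rel T :=
  fun w w' => [exists s in S, s w == w'].

Definition vboundary (T : finType) (adj : rel T) (X : {set T}) : {set T} :=
  [set y in ~: X | [exists x in X, adj x y]].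

(* Vertex Cheeger constant
   h_ver = min_{X <> 0, |X| <= |V|/2} |dX| / |X|
   (the default #|T| is never attained as a value when there is a candidate
   set, since every ratio is < #|T|; it only matters for |V| <= 1). *)
Definition hver (R : realType) (T : finType) (adj : rel T) : R :=
  \big[Num.min/(#|T|%:R : R)]_(X : {set T} | (X != set0) && (2 * #|X| <= #|T|)%N)
     ((#|vboundary adj X|%:R : R) / (#|X|%:R)).

(* Main.v *)
Require Import Defs.
From HB Require Import structures.
From mathcomp Require Import all_boot all_order all_algebra all_fingroup.
From mathcomp Require Import reals.
From mathcomp Require Import zify ring lra.
Import Order.TTheory GRing.Theory Num.Theory.

Lemma sum_window n a b :
  (\sum_(t < n) ((b <= t) && (t < a)) = minn a n - b)%N.
Proof.
elim: n => [|n IH]; first by rewrite big_ord0 minn0.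
rewrite big_ord_recr /= IH.
case: (leqP b n) => Hb; case: (ltnP n a) => Ha /=; lia.
Qed.

Lemma card_as_sum {T : finType} (A : {set T}) :
  #|A| = (\sum_(y : T) (y \in A))%N.
Proof. by rewrite -sum1_card big_mkcond. Qed.

Lemma partition_count (T D : finType) (P : D -> T) (Q : pred D) :
  (\sum_(y : T) #|[set d | (P d == y) && Q d]| = #|[set d | Q d]|)%N.
Proof.
rewrite card_as_sum (partition_big P predT) //=.
apply: eq_bigr => y _; rewrite card_as_sum [RHS]big_mkcond /=.
apply: eq_bigr => d _; rewrite !inE; by case: (P d == y); case: (Q d).
Qed.

Lemma card_bigcup_le {T : finType} {k} (A : 'I_k -> {set T}) :
  (#|\bigcup_(j < k) A j| <= \sum_(j < k) #|A j|)%N.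
Proof.
elim: k A => [|k IH] A; first by rewrite big_ord0 cards0.
rewrite big_ord_recr /= big_ord_recr /= cardsU.
apply: leq_trans (leq_subr _ _) _; by rewrite leq_add2r IH.
Qed.


Lemma coarea (T D : finType) (k M : nat) (S : {set {perm T}})
  (g : 'I_k -> {perm T}) (P : D -> T) (good : 'I_k -> pred D)
  (sig : 'I_k -> D -> D) :
  (forall s, s \in S -> exists j, s = g j) ->
  (forall j d, good j d -> P (sig j d) = g j (P d)) ->
  (forall j, {in good j &, injective (sig j)}) ->
  (M * \sum_(j < k) #|[set d | ~~ good j d]| < #|D|)%N ->
  exists X : {set T}, [/\ X != set0, (#|X| <= #|D|)%N &
     (M * #|vboundary (sch_adj S) X| < #|X|)%N].
Proof.
move=> HS Hsig Hinj Hbad.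
set n := #|D|.
pose phi y := #|[set d | (P d == y) && true]|.
pose X t := [set y | (t <= phi y)%N].
have phin y : (phi y <= n)%N by rewrite /phi /n; apply: max_card.
have sumX : (\sum_(t < n) #|X t.+1| = n)%N.
  transitivity (\sum_(y : T) phi y)%N; last first.
    rewrite partition_count; apply: eq_card => d; by rewrite inE.
  rewrite (eq_bigr (fun t : 'I_n => \sum_y (y \in X t.+1))%N); last by move=> t _; apply: card_as_sum.
  rewrite exchange_big /=; apply: eq_bigr => y _.
  transitivity (\sum_(t < n) ((0 <= t) && (t < phi y)))%N.
    by apply: eq_bigr => t _; rewrite inE.
  rewrite sum_window; have := phin y; lia.
pose B j t := [set x | (phi (g j x) < t <= phi x)%N].
have bd t : (#|vboundary (sch_adj S) (X t)| <= \sum_(j < k) #|B j t|)%N.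
  apply: (@leq_trans #|\bigcup_(j < k) (g j @: B j t)|).
    apply: subset_leq_card; apply/subsetP => y.
    rewrite inE => /andP [yX /existsP [x /andP [xX /existsP [s /andP [sS /eqP sx]]]]].
    have [j sj] := HS s sS; subst s.
    apply/bigcupP; exists j => //; rewrite -sx; apply: imset_f.
    move: yX xX; rewrite !inE -sx; lia.
  apply: leq_trans (card_bigcup_le (fun j => g j @: B j t)) _.
  by apply: leq_sum => j _; apply: leq_imset_card.
have sumB j : (\sum_(t < n) #|B j t.+1| <= #|[set d | ~~ good j d]|)%N.
  rewrite (eq_bigr (fun t : 'I_n => \sum_y (y \in B j t.+1))%N); last by move=> t _; apply: card_as_sum.
  rewrite exchange_big /= -(@partition_count T D P (fun d => ~~ good j d)).
  apply: leq_sum => x _.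
  rewrite (_ : (\sum_(t < n) (x \in B j t.+1)) = \sum_(t < n) ((phi (g j x) <= t) && (t < phi x)))%N; last first.
    by apply: eq_bigr => t _; rewrite inE.
  rewrite sum_window.
  have e1 : (phi x = #|[set d | (P d == x) && good j d]| + #|[set d | (P d == x) && ~~ good j d]|)%N.
    rewrite /phi -(cardsID [set d | good j d] [set d | (P d == x) && true]).
    congr (_ + _)%N; apply: eq_card => d; rewrite !inE; by case: (good j d); rewrite ?andbT ?andbF.
  have e2 : (#|[set d | (P d == x) && good j d]| <= phi (g j x))%N.
    rewrite -(card_in_imset (f := sig j)).
      apply: subset_leq_card; apply/subsetP => d' /imsetP [d].
      rewrite inE => /andP [/eqP Pd gd] ->; by rewrite inE Hsig // Pd eqxx.
    move=> d1 d2; rewrite !inE => /andP [_ g1] /andP [_ g2]; exact: Hinj.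
  have := phin x; lia.
case: (boolP [exists t : 'I_n, (X t.+1 != set0) &&
   (M * #|vboundary (sch_adj S) (X t.+1)| < #|X t.+1|)%N]).
  move=> /existsP [t /andP [ne lt]]; exists (X t.+1); split => //.
  rewrite -{2}sumX (bigD1 t) //=; exact: leq_addr.
move=> /existsPn H; exfalso.
have H1 : (n <= M * \sum_(t < n) \sum_(j < k) #|B j t.+1|)%N.
  rewrite -{1}sumX big_distrr /=; apply: leq_sum => t _.
  apply: (leq_trans _ (leq_mul (leqnn M) (bd t.+1))).
  have := H t; rewrite negb_and negbK => /orP [/eqP ->|]; first by rewrite cards0.
  by rewrite -leqNgt.
have H2 : (\sum_(t < n) \sum_(j < k) #|B j t.+1| <= \sum_(j < k) #|[set d | ~~ good j d]|)%N.
  rewrite exchange_big; apply: leq_sum => j _; exact: sumB.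
have := leq_mul (leqnn M) H2; lia.
Qed.

Set Implicit Arguments. Unset Strict Implicit.

Definition upd {I : finType} {A : Type} (f : {ffun I -> A}) (i : I) (a : A) :
  {ffun I -> A} := [ffun x => if x == i then a else f x].

Lemma upd_eq1 (I : finType) (A : Type) (f f' : {ffun I -> A}) i v v' :
  upd f i v = upd f' i v' -> v = v' /\ (forall x, x != i -> f x = f' x).
Proof.
move=> E; split.
  by have := congr1 (fun h : {ffun I -> A} => h i) E; rewrite !ffunE eqxx.
move=> x /negbTE xi; by have := congr1 (fun h : {ffun I -> A} => h x) E; rewrite !ffunE xi.
Qed.

Lemma upd_eq (I : finType) (A : Type) (f f' : {ffun I -> A}) i v v' :
  upd f i v = upd f' i v' -> f i = f' i -> v = v' /\ f = f'.
Proof.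
move=> E0 E; have [ev H] := upd_eq1 E0; subst v'; split => //; apply/ffunP => x.
by case: (eqVneq x i) => [->|/H].
Qed.

Lemma upd_inj (I : finType) n (f f' : {ffun I -> 'I_n.+1}) i :
  (f i < n)%N -> (f' i < n)%N ->
  upd f i (inord (f i).+1) = upd f' i (inord (f' i).+1) -> f = f'.
Proof.
move=> h h' E0; have [E H] := upd_eq1 E0.
have : ((f i).+1 = (f' i).+1)%N.
  by rewrite -(@inordK n (f i).+1) // -(@inordK n (f' i).+1) // E.
move=> [] /val_inj Ei; apply/ffunP => x.
by case: (eqVneq x i) => [->|/H].
Qed.

Lemma count_inj (D : finType) (L : nat) (B : pred D) (h : 'I_L -> D -> D) :
  (forall v1 v2 d1 d2, B d1 -> B d2 -> h v1 d1 = h v2 d2 -> v1 = v2 /\ d1 = d2) ->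
  (L * #|[set d | B d]| <= #|D|)%N.
Proof.
move=> H.
pose f (x : {d | B d} * 'I_L) := h x.2 (val x.1).
have finj : injective f.
  move=> [[d1 b1] v1] [[d2 b2] v2]; rewrite /f /= => E.
  have [-> e] := H _ _ _ _ b1 b2 E; subst d2.
  by rewrite (bool_irrelevance b1 b2).
have := leq_card f finj; rewrite card_prod card_ord card_sig mulnC.
by rewrite (eq_card (B := [set d | B d])) // => d; rewrite inE.
Qed.

Set Implicit Arguments. Unset Strict Implicit.
Local Open Scope ring_scope.

Section Aff.
Variables (F : fieldType) (k n : nat) (a b : 'I_k -> F).
Hypothesis anz : forall j, a j != 0.

Definition Mt := {ffun 'I_k -> 'I_n.+1}.
Definition Dt := (Mt * {ffun ('I_k * Mt) -> 'I_n.+1})%type.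

Definition apow (m : Mt) : F := \prod_i a i ^+ m i.
Definition ainv (m : Mt) : F := \prod_i (a i)^-1 ^+ m i.
Definition Pm (d : Dt) : F :=
  apow d.1 * \sum_(q : 'I_k * Mt) (d.2 q)%:R * ainv q.2 * (a q.1)^-1 * b q.1.
Definition sg (j : 'I_k) (d : Dt) : Dt :=
  (upd d.1 j (inord (d.1 j).+1), upd d.2 (j, d.1) (inord (d.2 (j, d.1)).+1)).
Definition good (j : 'I_k) : pred Dt :=
  fun d => (d.1 j != ord_max) && (d.2 (j, d.1) != ord_max).

Lemma ltn_nmax (i : 'I_n.+1) : i != ord_max -> (i < n)%N.
Proof. move=> h; have := ltn_ord i; move: h; rewrite -val_eqE /=; lia. Qed.

Lemma apow_ainv m : apow m * ainv m = 1.
Proof.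
rewrite /apow /ainv -big_split /=; apply: big1 => i _.
by rewrite -exprMn mulfV ?anz // expr1n.
Qed.

Lemma Pm_sg j d : good j d -> Pm (sg j d) = a j * Pm d + b j.
Proof.
case: d => m c /andP [/= h1 h2]; rewrite /Pm /sg /=.
have e1 : apow (upd m j (inord (m j).+1)) = a j * apow m.
  rewrite /apow (bigD1 j) //= [X in _ = _ * X](bigD1 j) //= ffunE eqxx.
  rewrite inordK; last by have := ltn_nmax h1; lia.
  rewrite exprS -mulrA; congr (_ * _); congr (_ * _).
  by apply: eq_bigr => i /negbTE ij; rewrite ffunE ij.
have e2 : \sum_(q : 'I_k * Mt) ((upd c (j, m) (inord (c (j, m)).+1)) q)%:R * ainv q.2 * (a q.1)^-1 * b q.1 =
          \sum_(q : 'I_k * Mt) (c q)%:R * ainv q.2 * (a q.1)^-1 * b q.1 + ainv m * (a j)^-1 * b j.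
  rewrite (bigD1 (j, m)) //= [X in _ = X + _](bigD1 (j, m)) //=.
  rewrite ffunE eqxx inordK; last by have := ltn_nmax h2; lia.
  rewrite -addrA [X in _ = _ + X]addrC addrA; congr (_ + _).
    by rewrite -natr1 !mulrDl mul1r.
  by apply: eq_bigr => q /negbTE qj; rewrite ffunE qj.
rewrite e1 e2.
have E : a j * apow m * (ainv m * (a j)^-1 * b j) = (apow m * ainv m) * (a j * (a j)^-1) * b j by ring.
by rewrite mulrDr E apow_ainv mulfV ?anz // !mul1r mulrA.
Qed.
Lemma sg_inj j : {in good j &, injective (sg j)}.
Proof.
move=> [m1 c1] [m2 c2] /andP [/= a1 b1] /andP [/= a2 b2] [E1 E2].
have em := upd_inj (ltn_nmax a1) (ltn_nmax a2) E1; subst m2.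
by have ec := upd_inj (ltn_nmax b1) (ltn_nmax b2) E2; subst c2.
Qed.

Lemma bad_count j : (n.+1 * #|[set d | ~~ good j d]| <= 2 * #|{: Dt}|)%N.
Proof.
have C1 : (n.+1 * #|[set d : Dt | d.1 j == ord_max]| <= #|{: Dt}|)%N.
  apply: (count_inj (h := fun v d => (upd d.1 j v, d.2))).
  move=> v1 v2 [m1 c1] [m2 c2] /= /eqP e1 /eqP e2 [E1 <-].
  have [-> ->] := upd_eq E1 (etrans e1 (esym e2)); by [].
have C2 : (n.+1 * #|[set d : Dt | d.2 (j, d.1) == ord_max]| <= #|{: Dt}|)%N.
  apply: (count_inj (h := fun v d => (d.1, upd d.2 (j, d.1) v))).
  move=> v1 v2 [m1 c1] [m2 c2] /= /eqP e1 /eqP e2 [E1 E2]; subst m2.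
  have [-> ->] := upd_eq E2 (etrans e1 (esym e2)); by [].
have sub : (#|[set d | ~~ good j d]| <= #|[set d : Dt | d.1 j == ord_max]| + #|[set d : Dt | d.2 (j, d.1) == ord_max]|)%N.
  apply: leq_trans (leq_card_setU _ _).1.
  apply: subset_leq_card; apply/subsetP => d; rewrite !inE negb_and !negbK.
  by [].
have := leq_mul (leqnn n.+1) sub; lia.
Qed.
End Aff.

Local Open Scope ring_scope.

Theorem mainTheorem3 :
  forall (R : realType) (k : nat) (eps : R),
    0 < eps ->
    forall S : forall p : nat, {set {perm 'F_p}},
      (forall p, prime p -> (2 < p)%N ->
         [/\ S p \subset Aff p, symmetric_set (S p) & (#|S p| <= k)%N]) ->
      exists p : nat, [/\ prime p, (2 < p)%N & hver R (sch_adj (S p)) < eps].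
Proof.
move=> R k eps heps S HS.
set M := Num.Def.archi_bound (eps^-1).
have hM : eps^-1 < M%:R by apply: archi_boundP; rewrite invr_ge0 ltW.
set n := (2 * k * M)%N.
have [p Hp pr] := prime_above (maxn 2 (2 * #|{: Dt k n}|)).
have h2p : (2 < p)%N by move: Hp; rewrite gtn_max => /andP [].
have hDp : (2 * #|{: Dt k n}| < p)%N by move: Hp; rewrite gtn_max => /andP [].
exists p; split => //.
have [Ssub _ Scard] := HS p pr h2p.
set e := enum (S p).
pose g (j : 'I_k) : {perm 'F_p} := nth 1%g e j.
have Hex j : exists ab : 'F_p * 'F_p, (ab.1 != 0) && [forall x, g j x == ab.1 * x + ab.2].
  case: (ltnP j (size e)) => hj.
    have : g j \in S p by rewrite -mem_enum mem_nth.
    move/(subsetP Ssub); rewrite inE => /existsP [a' /existsP [b' /andP [anz H]]].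
    by exists (a', b'); rewrite anz.
  rewrite /g nth_default //; exists (1, 0); rewrite oner_neq0 /=.
  by apply/forallP => x; rewrite perm1 mul1r addr0.
pose a j := (xchoose (Hex j)).1; pose b j := (xchoose (Hex j)).2.
have Hab j : (a j != 0) /\ forall x, g j x = a j * x + b j.
  have /andP [h1 /forallP h2] := xchooseP (Hex j); split => // x; exact/eqP/h2.
have anz j : a j != 0 by case: (Hab j).
have HSg : forall s, s \in S p -> exists j, s = g j.
  move=> s sS; have se : s \in e by rewrite mem_enum.
  have hi : (index s e < k)%N.
    by apply: leq_trans Scard; rewrite cardE -/e index_mem.
  by exists (Ordinal hi); rewrite /g /= nth_index.
have Hsig : forall (j : 'I_k) (d : Dt k n), good j d -> Pm a b (sg j d) = g j (Pm a b d).
  by move=> j d gd; rewrite (Pm_sg b anz gd) (Hab j).2.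
have Dpos : (0 < #|{: Dt k n}|)%N.
  by apply/card_gt0P; exists ([ffun=> ord0], [ffun=> ord0]).
have Hbad : (M * \sum_(j < k) #|[set d : Dt k n | ~~ good j d]| < #|{: Dt k n}|)%N.
  have hs : (n.+1 * \sum_(j < k) #|[set d : Dt k n | ~~ good j d]| <= k * (2 * #|{: Dt k n}|))%N.
    rewrite big_distrr /=.
    apply: (@leq_trans (\sum_(i < k) 2 * #|{: Dt k n}|)); first by apply: leq_sum => j _; apply: bad_count.
    by rewrite sum_nat_const card_ord.
  move: hs; set s := (\sum_(j < k) _)%N; set D := #|_| => hs.
  have h1 : (n.+1 * (M * s) <= n * D)%N.
    rewrite mulnCA (_ : (n * D = M * (k * (2 * D)))%N); first exact: leq_mul.
    rewrite /n; ring.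
  have h2 : (n * D < n.+1 * D)%N by rewrite ltn_pmul2r.
  by rewrite -(ltn_pmul2l (ltn0Sn n)); apply: leq_ltn_trans h1 h2.
have [X [Xne Xc Xb]] := @coarea _ _ k M (S p) g (Pm a b) (@good k n) (@sg k n) HSg Hsig (fun j => @sg_inj k n j) Hbad.
have hX : (2 * #|X| <= #|'F_p|)%N.
  by rewrite card_Fp //; apply: leq_trans (ltnW hDp); rewrite leq_mul2l Xc orbT.
rewrite /hver; apply: (le_lt_trans (@bigmin_le_cond _ _ _ _ X _ _ _)).
  by rewrite Xne hX.
have key : (#|vboundary (sch_adj (S p)) X|%:R / #|X|%:R < eps :> R); last exact: key.
have Xpos : (0 < #|X|)%N by rewrite card_gt0.
rewrite ltr_pdivrMr ?ltr0n //.
have h1 : 1 < eps * M%:R.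
  have ee : eps * eps^-1 = 1 by rewrite mulfV // lt0r_neq0.
  nra.
have h2 : (M * #|vboundary (sch_adj (S p)) X|)%:R < (#|X|%:R : R) by rewrite ltr_nat.
rewrite natrM in h2.
have h3 : (0 : R) <= #|vboundary (sch_adj (S p)) X|%:R by [].
nra.
Qed.
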